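(* For every $q\in(0,1/2)$, the functions $L\mapsto T_{\rm rel}(L)$, $L\mapsto T_{\rm mix}(L)$ and $L\mapsto T_{\rm hit}(L)$ are non-decreasing on the positive integers.
   Context: Fix $q\in(0,1/2)$, $p=1-q$. For $\Lambda=\{1,\dots,L\}$ the East process is the Markov chain on $\{0,1\}^\Lambda$ with generator $\mathcal L f(\sigma)=\sum_{x}c_x(\sigma)[\pi_x(f)-f](\sigma)$, $c_1\equiv1$, $c_x(\sigma)=1-\sigma_{x-1}$ ($x\ge2$), $\pi_x(f)$ the average over $\sigma_x\sim$ Bernoulli$(p)$; $\pi$ is the product Bernoulli$(p)$ measure. $T_{\rm rel}(L)$ is the inverse spectral gap; $T_{\rm mix}(L)=\inf\{t:\max_\eta\|\mathbb P_\eta(\eta(t)\in\cdot)-\pi\|_{TV}\le1/4\}$; $T_{\rm hit}(L)=\mathbb E_{\mathbb 10}[\tau_{\eta_L=1}]$ where $\mathbb 10$ has $\sigma_x=1$ for $x<L$, $\sigma_L=0$, and $\tau_{\eta_L=1}$ is the hitting time of $\{\eta_L=1\}$. *)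

(* Defs.v *)
From Stdlib Require Import Reals List ClassicalEpsilon Arith.
Import ListNotations.
Open Scope R_scope.

Definition lsum {A : Type} (l : list A) (f : A -> R) : R :=
  fold_right (fun a s => f a + s) 0 l.

Definition is_lower_bound (E : R -> Prop) (m : R) : Prop :=
  forall x, E x -> m <= x.
Definition is_glb (E : R -> Prop) (m : R) : Prop :=
  is_lower_bound E m /\ forall b, is_lower_bound E b -> b <= m.

(** Infimum (chosen classically; meaningful when the glb exists). *)
Definition Rinf (E : R -> Prop) : R := epsilon (inhabits 0) (is_glb E).

(** Limit of a real sequence (chosen classically; meaningful when it converges). *)
Definition Lim (u : nat -> R) : R := epsilon (inhabits 0) (fun l => Un_cv u l).

(** * Configuration space {0,1}^{1..L}
    A configuration is a list of booleans of length L; site x (1 <= x <= L)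
    is stored at list index x-1, and sigma_x = 1 iff the entry is true. *)

Fixpoint configs (L : nat) : list (list bool) :=
  match L with
  | O => [ [] ]
  | S n => map (cons false) (configs n) ++ map (cons true) (configs n)
  end.

Definition spin (s : list bool) (i : nat) : bool := nth i s false.

Fixpoint upd (s : list bool) (i : nat) (b : bool) : list bool :=
  match s, i with
  | [], _ => []
  | _ :: t, O => b :: t
  | a :: t, S j => a :: upd t j b
  end.

Definition cfg_eqb (s t : list bool) : bool :=
  if list_eq_dec Bool.bool_dec s t then true else false.

Section East.
Variable q : R.
Definition p : R := 1 - q.

Definition bern (b : bool) : R := if b then p else q.

Definition piL (s : list bool) : R := fold_right (fun b r => bern b * r) 1 s.

Definition cons_rate (s : list bool) (i : nat) : R :=
  match i with
  | O => 1
  | S j => 1 - (if spin s j then 1 else 0)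
  end.

Definition Lgen (L : nat) (f : list bool -> R) (s : list bool) : R :=
  lsum (seq 0 L) (fun i =>
    cons_rate s i * (p * f (upd s i true) + q * f (upd s i false) - f s)).

Definition piE (L : nat) (f : list bool -> R) : R :=
  lsum (configs L) (fun s => piL s * f s).
Definition Var (L : nat) (f : list bool -> R) : R :=
  piE L (fun s => f s * f s) - piE L f * piE L f.
Definition Dir (L : nat) (f : list bool -> R) : R :=
  - piE L (fun s => f s * Lgen L f s).

Definition gap (L : nat) : R :=
  Rinf (fun g => exists f : list bool -> R, Var L f <> 0 /\ g = Dir L f / Var L f).
Definition Trel (L : nat) : R := / gap L.

Definition Qmat (L : nat) (s t : list bool) : R :=
  Lgen L (fun u => if cfg_eqb u t then 1 else 0) s.
Fixpoint Qpow (L : nat) (n : nat) (s t : list bool) : R :=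
  match n with
  | O => if cfg_eqb s t then 1 else 0
  | S m => lsum (configs L) (fun u => Qmat L s u * Qpow L m u t)
  end.

(** Transition probabilities P_eta(eta(t) = s) = (exp(t Q))(eta, s). *)
Definition Pt (L : nat) (t : R) (eta s : list bool) : R :=
  Lim (fun N => sum_f_R0 (fun n => t ^ n / INR (Factorial.fact n) * Qpow L n eta s) N).

Definition dTV (L : nat) (t : R) (eta : list bool) : R :=
  / 2 * lsum (configs L) (fun s => Rabs (Pt L t eta s - piL s)).

Definition Tmix (L : nat) : R :=
  Rinf (fun t => 0 <= t /\ forall eta, In eta (configs L) -> dTV L t eta <= / 4).

Definition one_zero (L : nat) : list bool := repeat true (L - 1) ++ [false].

Definition target (L : nat) (s : list bool) : Prop := spin s (L - 1) = true.

(** Expected hitting time of {eta_L = 1} from 1 0, as the minimal non-negative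
    solution h of  h = 0 on the target,  (Q h)(s) = -1 off the target. *)
Definition Thit (L : nat) : R :=
  Rinf (fun v => exists h : list bool -> R,
    (forall s, In s (configs L) -> 0 <= h s) /\
    (forall s, In s (configs L) -> target L s -> h s = 0) /\
    (forall s, In s (configs L) -> ~ target L s ->
        lsum (configs L) (fun u => Qmat L s u * h u) = -1) /\
    v = h (one_zero L)).

End East.

(* Main.v *)
Require Import Defs.
From Stdlib Require Import Reals List.
From Stdlib Require Import Lra Lia ClassicalEpsilon Arith.
Import ListNotations.
Open Scope R_scope.

Lemma lsum_nil {A} (f : A -> R) : lsum [] f = 0.
Proof. reflexivity. Qed.
Lemma lsum_cons {A} a l (f : A -> R) : lsum (a :: l) f = f a + lsum l f.
Proof. reflexivity. Qed.
Lemma lsum_app {A} (l1 l2 : list A) f : lsum (l1 ++ l2) f = lsum l1 f + lsum l2 f.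
Proof. induction l1; simpl; [ring| rewrite IHl1; ring]. Qed.
Lemma lsum_map {A B} (g : A -> B) l f : lsum (map g l) f = lsum l (fun a => f (g a)).
Proof. induction l; simpl; [reflexivity| rewrite IHl; reflexivity]. Qed.
Lemma lsum_ext {A} (l : list A) f g : (forall a, In a l -> f a = g a) -> lsum l f = lsum l g.
Proof. induction l; simpl; intros H; [reflexivity|]. rewrite H by auto. rewrite IHl by auto. reflexivity. Qed.
Lemma lsum_plus {A} (l : list A) f g : lsum l (fun a => f a + g a) = lsum l f + lsum l g.
Proof. induction l; simpl; [ring| rewrite IHl; ring]. Qed.
Lemma lsum_minus {A} (l : list A) f g : lsum l (fun a => f a - g a) = lsum l f - lsum l g.
Proof. induction l; simpl; [ring| rewrite IHl; ring]. Qed.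
Lemma lsum_scal {A} (l : list A) c f : lsum l (fun a => c * f a) = c * lsum l f.
Proof. induction l; simpl; [ring| rewrite IHl; ring]. Qed.
Lemma lsum_scalr {A} (l : list A) c f : lsum l (fun a => f a * c) = lsum l f * c.
Proof. induction l; simpl; [ring| rewrite IHl; ring]. Qed.
Lemma lsum_opp {A} (l : list A) f : lsum l (fun a => - f a) = - lsum l f.
Proof. induction l; simpl; [ring| rewrite IHl; ring]. Qed.
Lemma lsum_zero {A} (l : list A) f : (forall a, In a l -> f a = 0) -> lsum l f = 0.
Proof. induction l; simpl; intros H; [reflexivity|]. rewrite H, IHl by auto. ring. Qed.
Lemma lsum_le {A} (l : list A) f g : (forall a, In a l -> f a <= g a) -> lsum l f <= lsum l g.
Proof. induction l; simpl; intros H; [lra|]. pose proof (H a (or_introl eq_refl)).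
  assert (lsum l f <= lsum l g) by auto. lra. Qed.
Lemma lsum_nonneg {A} (l : list A) f : (forall a, In a l -> 0 <= f a) -> 0 <= lsum l f.
Proof. intros H. replace 0 with (lsum l (fun _ => 0)). apply lsum_le; auto. apply lsum_zero; auto. Qed.
Lemma lsum_exch {A B} (l1 : list A) (l2 : list B) F :
  lsum l1 (fun a => lsum l2 (fun b => F a b)) = lsum l2 (fun b => lsum l1 (fun a => F a b)).
Proof. induction l1; simpl. symmetry; apply lsum_zero; auto.
  rewrite IHl1. rewrite <- lsum_plus. reflexivity. Qed.
Lemma lsum_abs {A} (l : list A) f : Rabs (lsum l f) <= lsum l (fun a => Rabs (f a)).
Proof. induction l; simpl. rewrite Rabs_R0; lra.
  eapply Rle_trans. apply Rabs_triang. lra. Qed.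
Lemma lsum_single_le {A} (l : list A) f a : In a l -> (forall b, In b l -> 0 <= f b) -> f a <= lsum l f.
Proof. induction l; simpl; intros Ha H; [contradiction|]. destruct Ha as [->|Ha].
  assert (0 <= lsum l f) by (apply lsum_nonneg; auto). lra.
  assert (0 <= f a0) by auto. assert (f a <= lsum l f) by auto. lra. Qed.

Lemma configs_len L s : In s (configs L) <-> length s = L.
Proof. revert s; induction L; simpl; intros s.
  split. intros [<-|[]]; reflexivity. destruct s; simpl; [auto| discriminate].
  rewrite in_app_iff, !in_map_iff. split.
  intros [[x [<- Hx]]|[x [<- Hx]]]; simpl; f_equal; apply IHL; auto.
  destruct s as [|b s]; simpl; [discriminate|]. intros H. injection H as H.
  destruct b; [right|left]; exists s; split; auto; apply IHL; auto. Qed.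

Lemma lsum_configs_S L F : lsum (configs (S L)) F =
  lsum (configs L) (fun u => F (false :: u)) + lsum (configs L) (fun u => F (true :: u)).
Proof. simpl. rewrite lsum_app, !lsum_map. reflexivity. Qed.

Lemma lsum_configs_last L F : lsum (configs (S L)) F =
  lsum (configs L) (fun u => F (u ++ [false]) + F (u ++ [true])).
Proof. revert F; induction L; intros F.
  simpl. ring.
  rewrite (lsum_configs_S (S L) F).
  rewrite (IHL (fun u => F (false :: u))), (IHL (fun u => F (true :: u))).
  rewrite (lsum_configs_S L (fun u => F (u ++ [false]) + F (u ++ [true]))).
  simpl. reflexivity. Qed.

Lemma cfg_eqb_spec s t : cfg_eqb s t = true <-> s = t.
Proof. unfold cfg_eqb. destruct (list_eq_dec Bool.bool_dec s t); split; congruence. Qed.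
Lemma cfg_eqb_refl s : cfg_eqb s s = true.
Proof. apply cfg_eqb_spec; reflexivity. Qed.
Lemma cfg_eqb_neq s t : s <> t -> cfg_eqb s t = false.
Proof. intros H. destruct (cfg_eqb s t) eqn:E; auto. apply cfg_eqb_spec in E; contradiction. Qed.

Lemma lsum_configs_ind L x h : length x = L ->
  lsum (configs L) (fun u => (if cfg_eqb x u then 1 else 0) * h u) = h x.
Proof. revert x h; induction L; intros x h Hx.
  destruct x; [|discriminate]. change (configs 0) with [@nil bool]. rewrite lsum_cons, lsum_nil, cfg_eqb_refl. ring.
  destruct x as [|b x]; [discriminate|]. simpl in Hx; injection Hx as Hx.
  rewrite lsum_configs_S.
  destruct b.
  - rewrite (lsum_zero _ (fun u => _ * h (false :: u))).
    2:{ intros u _. rewrite cfg_eqb_neq by congruence. ring. }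
    rewrite (lsum_ext _ _ (fun u => (if cfg_eqb x u then 1 else 0) * h (true :: u))).
    rewrite IHL by auto. ring.
    intros u _. destruct (cfg_eqb x u) eqn:E. apply cfg_eqb_spec in E; subst. rewrite cfg_eqb_refl; auto.
    rewrite cfg_eqb_neq; auto. intros Heq; injection Heq as ->. rewrite cfg_eqb_refl in E; discriminate.
  - rewrite (lsum_zero _ (fun u => _ * h (true :: u))).
    2:{ intros u _. rewrite cfg_eqb_neq by congruence. ring. }
    rewrite (lsum_ext _ _ (fun u => (if cfg_eqb x u then 1 else 0) * h (false :: u))).
    rewrite IHL by auto. ring.
    intros u _. destruct (cfg_eqb x u) eqn:E. apply cfg_eqb_spec in E; subst. rewrite cfg_eqb_refl; auto.
    rewrite cfg_eqb_neq; auto. intros Heq; injection Heq as ->. rewrite cfg_eqb_refl in E; discriminate.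
Qed.

Lemma upd_length s i b : length (upd s i b) = length s.
Proof. revert i; induction s; intros [|i]; simpl; auto. Qed.
Lemma upd_app_l s i b c : (i < length s)%nat -> upd (s ++ [c]) i b = upd s i b ++ [c].
Proof. revert i; induction s; intros [|i] H; simpl in *; try lia; auto.
  rewrite IHs by lia. reflexivity. Qed.
Lemma upd_app_last s b c : upd (s ++ [c]) (length s) b = s ++ [b].
Proof. induction s; simpl; auto. rewrite IHs. reflexivity. Qed.
Lemma spin_app_l s i c : (i < length s)%nat -> spin (s ++ [c]) i = spin s i.
Proof. intros H. unfold spin. apply app_nth1; auto. Qed.
Lemma spin_app_last s c : spin (s ++ [c]) (length s) = c.
Proof. unfold spin. rewrite app_nth2 by lia. rewrite Nat.sub_diag. reflexivity. Qed.
Lemma upd_upd s i b c : upd (upd s i b) i c = upd s i c.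
Proof. revert i; induction s; intros [|i]; simpl; auto. rewrite IHs; auto. Qed.
Lemma spin_upd_other s i j b : i <> j -> spin (upd s i b) j = spin s j.
Proof. unfold spin. revert i j; induction s; intros [|i] [|j] H; simpl; auto; try lia.
  all: apply IHs; lia. Qed.
Lemma spin_upd_same s i b : (i < length s)%nat -> spin (upd s i b) i = b.
Proof. unfold spin. revert i; induction s; intros [|i] H; simpl in *; auto; try lia.
  apply IHs. lia. Qed.
Lemma upd_spin s i : upd s i (spin s i) = s.
Proof. unfold spin; revert i; induction s; intros [|i]; simpl; auto. rewrite IHs; auto. Qed.
Lemma cons_rate_upd s i b : cons_rate (upd s i b) i = cons_rate s i.
Proof. destruct i; simpl; auto. rewrite spin_upd_other by lia. reflexivity. Qed.
Lemma cons_rate_app s i c : (i < length s)%nat -> cons_rate (s ++ [c]) i = cons_rate s i.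
Proof. destruct i; simpl; auto. intros H. rewrite spin_app_l by lia. reflexivity. Qed.
Lemma cons_rate_range s i : 0 <= cons_rate s i <= 1.
Proof. destruct i; simpl; [lra|]. destruct (spin s i); lra. Qed.

Section S.
Variable q : R.
Hypothesis hq0 : 0 < q.
Hypothesis hq1 : q < / 2.
Notation p := (Defs.p q).

Lemma pq1 : p + q = 1.
Proof. unfold Defs.p. ring. Qed.
Lemma qp_same x : q * x + p * x = x.
Proof. replace (q*x+p*x) with ((p+q)*x) by ring. rewrite pq1; ring. Qed.
Lemma pq_same x : p * x + q * x = x.
Proof. replace (p*x+q*x) with ((p+q)*x) by ring. rewrite pq1; ring. Qed.
Lemma p_pos : 0 < p.
Proof. unfold Defs.p. lra. Qed.
Lemma q_lt_p : q < p.
Proof. unfold Defs.p. lra. Qed.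

Lemma bern_pos b : 0 < bern q b.
Proof. destruct b; simpl; [apply p_pos|lra]. Qed.
Lemma piL_pos s : 0 < piL q s.
Proof. induction s; simpl; [lra|]. apply Rmult_lt_0_compat; auto. apply bern_pos. Qed.
Lemma piL_app s b : piL q (s ++ [b]) = piL q s * bern q b.
Proof. induction s; simpl. ring. rewrite IHs. ring. Qed.

Lemma piE_S L G : piE q (S L) G = piE q L (fun u => q * G (false :: u) + p * G (true :: u)).
Proof. unfold piE. rewrite lsum_configs_S, <- lsum_plus. apply lsum_ext; intros. simpl. ring. Qed.
Lemma piE_last L G : piE q (S L) G = piE q L (fun u => q * G (u ++ [false]) + p * G (u ++ [true])).
Proof. unfold piE. rewrite lsum_configs_last. apply lsum_ext; intros. rewrite !piL_app. simpl. ring. Qed.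
Lemma piE_ext L f g : (forall s, length s = L -> f s = g s) -> piE q L f = piE q L g.
Proof. intros H; unfold piE; apply lsum_ext; intros s Hs. rewrite H; auto. apply configs_len; auto. Qed.
Lemma piE_plus L f g : piE q L (fun s => f s + g s) = piE q L f + piE q L g.
Proof. unfold piE. rewrite <- lsum_plus. apply lsum_ext; intros; ring. Qed.
Lemma piE_minus L f g : piE q L (fun s => f s - g s) = piE q L f - piE q L g.
Proof. unfold piE. rewrite <- lsum_minus. apply lsum_ext; intros; ring. Qed.
Lemma piE_scal L c f : piE q L (fun s => c * f s) = c * piE q L f.
Proof. unfold piE. rewrite <- lsum_scal. apply lsum_ext; intros; ring. Qed.
Lemma piE_le L f g : (forall s, length s = L -> f s <= g s) -> piE q L f <= piE q L g.
Proof. intros H; unfold piE; apply lsum_le; intros s Hs. apply configs_len in Hs.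
  apply Rmult_le_compat_l; auto. left; apply piL_pos. Qed.
Lemma piE_nonneg L f : (forall s, length s = L -> 0 <= f s) -> 0 <= piE q L f.
Proof. intros H. replace 0 with (piE q L (fun _ => 0)). apply piE_le; auto.
  unfold piE; apply lsum_zero; intros; ring. Qed.
Lemma piE_const L c : piE q L (fun _ => c) = c.
Proof. induction L. unfold piE; simpl; ring. rewrite piE_S. 
  transitivity (piE q L (fun _ => c)). apply piE_ext; intros. apply qp_same. auto. Qed.
Lemma piE_last_const L G H : (forall u b, length u = L -> G (u ++ [b]) = H u) -> piE q (S L) G = piE q L H.
Proof. intros HG. rewrite piE_last. apply piE_ext. intros u Hu. rewrite !HG by auto.
  apply qp_same. Qed.

Lemma piE_resample L i h : (i < L)%nat ->
  piE q L h = piE q L (fun s => p * h (upd s i true) + q * h (upd s i false)).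
Proof. revert i h; induction L; intros i h Hi; [lia|].
  rewrite !piE_S. destruct i as [|i].
  - apply piE_ext; intros u _. simpl. rewrite qp_same. ring.
  - simpl. rewrite piE_plus, !piE_scal, (IHL i (fun u => h (false :: u))) by lia.
    rewrite (IHL i (fun u => h (true :: u))) by lia. rewrite <- !piE_scal, <- piE_plus.
    apply piE_ext; intros; ring. Qed.

Lemma Lgen_ext L f g s : length s = L -> (forall u, length u = L -> f u = g u) ->
  Lgen q L f s = Lgen q L g s.
Proof. intros Hs H. unfold Lgen. apply lsum_ext; intros i Hi.
  rewrite !H; auto; rewrite upd_length; auto. Qed.

Lemma Lgen_last L f s b : length s = L ->
  Lgen q (S L) f (s ++ [b]) = Lgen q L (fun u => f (u ++ [b])) s +
    cons_rate (s ++ [b]) L * (p * f (s ++ [true]) + q * f (s ++ [false]) - f (s ++ [b])).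
Proof. intros Hs. unfold Lgen. rewrite seq_S, lsum_app. simpl. f_equal.
  apply lsum_ext; intros i Hi. apply in_seq in Hi.
  rewrite cons_rate_app, !upd_app_l by lia. reflexivity.
  subst L. rewrite !upd_app_last. ring. Qed.



Lemma Lgen_const L c s : Lgen q L (fun _ => c) s = 0.
Proof. unfold Lgen. apply lsum_zero; intros. rewrite pq_same. ring. Qed.

Lemma Lgen_lin L a f g s : Lgen q L (fun u => a * f u + g u) s = a * Lgen q L f s + Lgen q L g s.
Proof. unfold Lgen. rewrite <- lsum_scal, <- lsum_plus. apply lsum_ext; intros; ring. Qed.

Lemma Qmat_sum L s h : length s = L ->
  lsum (configs L) (fun u => Qmat q L s u * h u) = Lgen q L h s.
Proof. intros Hs. unfold Qmat, Lgen.
  rewrite (lsum_ext _ _ (fun u => lsum (seq 0 L) (fun i => cons_rate s i *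
     (p * ((if cfg_eqb (upd s i true) u then 1 else 0) * h u) +
      q * ((if cfg_eqb (upd s i false) u then 1 else 0) * h u) -
      (if cfg_eqb s u then 1 else 0) * h u)))).
  2:{ intros u _. rewrite <- lsum_scalr. apply lsum_ext; intros; ring. }
  rewrite lsum_exch. apply lsum_ext; intros i _.
  rewrite lsum_scal, lsum_minus, lsum_plus, !lsum_scal, !lsum_configs_ind; auto; rewrite upd_length; auto.
Qed.

Lemma firstn_app_last L (u : list bool) b : length u = L -> firstn L (u ++ [b]) = u.
Proof. intros <-. induction u; simpl; auto. rewrite IHu; auto. Qed.

End S.

Lemma glb_exists (E : R -> Prop) : (exists x, E x) -> (exists m, is_lower_bound E m) -> is_glb E (Rinf E).
Proof. intros [x Hx] [m Hm].
  assert (H : exists g, is_glb E g).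
  { destruct (completeness (fun y => E (- y))) as [l [Hl1 Hl2]].
    - exists (- m). intros y Hy. specialize (Hm _ Hy). lra.
    - exists (- x). rewrite Ropp_involutive. auto.
    - exists (- l). split.
      + intros y Hy. assert (- y <= l). apply Hl1. rewrite Ropp_involutive; auto. lra.
      + intros b Hb. assert (l <= - b). apply Hl2. intros y Hy. specialize (Hb _ Hy). lra. lra. }
  unfold Rinf. apply (epsilon_spec (inhabits 0) (is_glb E)). exact H. Qed.


Section T.
Variable q : R.
Hypothesis hq0 : 0 < q.
Hypothesis hq1 : q < / 2.
Notation p := (Defs.p q).

Lemma piE_lsum L {A} (l : list A) F :
  piE q L (fun s => lsum l (fun i => F s i)) = lsum l (fun i => piE q L (fun s => F s i)).
Proof. unfold piE. rewrite (lsum_ext _ _ (fun s => lsum l (fun i => piL q s * F s i))).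
  apply lsum_exch. intros; rewrite <- lsum_scal; reflexivity. Qed.

Lemma piE_opp L f : piE q L (fun s => - f s) = - piE q L f.
Proof. unfold piE. rewrite <- lsum_opp. apply lsum_ext; intros; ring. Qed.

Definition Dterm L f i := piE q L (fun s => cons_rate s i * (p * q) *
   ((f (upd s i true) - f (upd s i false)) * (f (upd s i true) - f (upd s i false)))).
Definition DD L f := lsum (seq 0 L) (Dterm L f).

Lemma Dir_DD L f : Dir q L f = DD L f.
Proof. unfold Dir, DD.
  rewrite (piE_ext q L _ (fun s => lsum (seq 0 L) (fun i => f s * (cons_rate s i *
    (p * f (upd s i true) + q * f (upd s i false) - f s))))).
  2:{ intros s _. unfold Lgen. rewrite lsum_scal. reflexivity. }
  rewrite piE_lsum.
  rewrite <- lsum_opp. apply lsum_ext; intros i Hi. apply in_seq in Hi.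
  rewrite <- piE_opp. rewrite (piE_resample q L i) by lia. unfold Dterm.
  apply piE_ext; intros s _. rewrite !upd_upd, !cons_rate_upd. unfold Defs.p. ring. Qed.

Lemma Dterm_nonneg L f i : 0 <= Dterm L f i.
Proof. unfold Dterm. apply piE_nonneg; auto. intros s _.
  pose proof (cons_rate_range s i). pose proof (p_pos q hq1).
  assert (0 <= p * q) by (apply Rmult_le_pos; lra).
  apply Rmult_le_pos. apply Rmult_le_pos. lra. lra. apply Rle_0_sqr. Qed.

Lemma DD_nonneg L f : 0 <= DD L f.
Proof. unfold DD. apply lsum_nonneg. intros; apply Dterm_nonneg. Qed.

Lemma piE_bilin L a b c d f g :
  piE q L (fun s => (a * f s + b * g s) * (c * f s + d * g s)) =
  a * c * piE q L (fun s => f s * f s) + (a * d + b * c) * piE q L (fun s => f s * g s)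
  + b * d * piE q L (fun s => g s * g s).
Proof. rewrite <- !piE_scal, <- !piE_plus; auto. apply piE_ext; intros; ring. Qed.
Lemma piE_lin L a b f g : piE q L (fun s => a * f s + b * g s) = a * piE q L f + b * piE q L g.
Proof. rewrite piE_plus, !piE_scal; auto. Qed.

Lemma Var_nonneg L f : 0 <= Var q L f.
Proof. unfold Var. set (m := piE q L f).
  assert (0 <= piE q L (fun s => (1 * f s + (- m) * 1) * (1 * f s + (- m) * 1))).
  { apply piE_nonneg; auto. intros; apply Rle_0_sqr. }
  rewrite piE_bilin in H. rewrite !piE_const in H; auto.
  replace (piE q L (fun s => f s * 1)) with m in H. fold m in H. nra.
  unfold m; apply piE_ext; intros; ring. Qed.

Lemma cons_rate_false_S u j : cons_rate (false :: u) (S j) = cons_rate u j.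
Proof. destruct j; simpl; unfold spin; simpl; [ring| reflexivity]. Qed.

Lemma Poincare L : exists C, 0 < C /\ forall f, Var q L f <= C * DD L f.
Proof.
  induction L as [|L [C [HC IH]]].
  { exists 1. split; [lra|]. intros f. pose proof (DD_nonneg 0 f).
    unfold Var, piE. simpl. nra. }
  pose proof (p_pos q hq1) as Hp. pose proof (q_lt_p q hq1) as Hqp.
  exists (3 * C / q + 3 / (p * q)). split.
  { assert (0 < 3 * C / q) by (unfold Rdiv; apply Rmult_lt_0_compat; [lra| apply Rinv_0_lt_compat; lra]).
    assert (0 < 3 / (p * q)) by (unfold Rdiv; apply Rmult_lt_0_compat; [lra| apply Rinv_0_lt_compat; nra]). lra. }
  intros f.
  set (g0 := fun u => f (false :: u)). set (g1 := fun u => f (true :: u)).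
  assert (HD : p * q * piE q L (fun u => (g1 u - g0 u) * (g1 u - g0 u)) + q * DD L g0 <= DD (S L) f).
  { unfold DD. change (seq 0 (S L)) with (0%nat :: seq 1 L). rewrite <- seq_shift. rewrite lsum_cons, lsum_map.
    assert (E0 : Dterm (S L) f 0 = p * q * piE q L (fun u => (g1 u - g0 u) * (g1 u - g0 u))).
    { unfold Dterm. rewrite piE_S. rewrite <- piE_scal. apply piE_ext; intros u _.
      simpl. unfold g0, g1. rewrite qp_same. ring. }
    rewrite E0. apply Rplus_le_compat_l. rewrite <- lsum_scal. apply lsum_le. intros j _.
    unfold Dterm. rewrite piE_S, <- piE_scal. apply (piE_le q hq0 hq1). intros u _.
    simpl upd. rewrite cons_rate_false_S. unfold g0.
    assert (0 <= p * (cons_rate (true :: u) (S j) * (p * q) *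
       ((f (upd (true :: u) (S j) true) - f (upd (true :: u) (S j) false)) *
        (f (upd (true :: u) (S j) true) - f (upd (true :: u) (S j) false))))).
    { pose proof (cons_rate_range (true :: u) (S j)).
      assert (0 <= p * q) by (apply Rmult_le_pos; lra).
      apply Rmult_le_pos. lra. apply Rmult_le_pos. apply Rmult_le_pos. lra. lra. apply Rle_0_sqr. }
    simpl upd in H. lra. }
  pose proof (IH g0) as HV0.
  pose proof (DD_nonneg L g0) as HD0.
  set (E00 := piE q L (fun u => g0 u * g0 u)).
  set (E11 := piE q L (fun u => g1 u * g1 u)).
  set (E01 := piE q L (fun u => g0 u * g1 u)).
  set (m0 := piE q L g0). set (m1 := piE q L g1).
  assert (HVf : Var q (S L) f = q * E00 + p * E11 - (q * m0 + p * m1) * (q * m0 + p * m1)).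
  { unfold Var. rewrite !piE_S. rewrite !piE_plus, !piE_scal. reflexivity. }
  assert (HV0' : Var q L g0 = E00 - m0 * m0) by reflexivity.
  assert (Hd2 : piE q L (fun u => (g1 u - g0 u) * (g1 u - g0 u)) = E00 - 2 * E01 + E11).
  { rewrite (piE_ext q L _ (fun u => ((-1) * g0 u + 1 * g1 u) * ((-1) * g0 u + 1 * g1 u))) by (intros; ring).
    rewrite piE_bilin. unfold E00, E11, E01. ring. }
  assert (Hvd : 0 <= Var q L (fun u => (-1) * g0 u + 1 * g1 u)) by apply Var_nonneg.
  assert (Hvd2 : 0 <= Var q L (fun u => 2 * g0 u + (-1) * g1 u)) by apply Var_nonneg.
  unfold Var in Hvd, Hvd2. rewrite !piE_bilin, !piE_lin in Hvd, Hvd2.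
  fold E00 E11 E01 m0 m1 in Hvd, Hvd2.
  rewrite Hd2 in HD. rewrite HVf.
  assert (Hpq : p = 1 - q) by reflexivity.
  set (Dg := DD L g0) in *. set (Dall := DD (S L) f) in *.
  rewrite HV0' in HV0.
  assert (Hstep : q * E00 + p * E11 - (q * m0 + p * m1) * (q * m0 + p * m1) <=
                  3 * (E00 - m0 * m0) + 3 * (E00 - 2 * E01 + E11)).
  { assert (Hid : q * E00 + p * E11 - (q * m0 + p * m1) * (q * m0 + p * m1) =
       q * (E00 - m0 * m0) + p * (E11 - m1 * m1) + p * q * ((m1 - m0) * (m1 - m0))).
    { rewrite Hpq. ring. }
    assert (HV1 : E11 - m1 * m1 <= 2 * (E00 - m0 * m0) + 2 * ((E00 - 2 * E01 + E11) - (m1 - m0) * (m1 - m0))) by nra.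
    assert (HVd : 0 <= (E00 - 2 * E01 + E11) - (m1 - m0) * (m1 - m0)) by nra.
    assert (HV0n : 0 <= E00 - m0 * m0) by (rewrite <- HV0'; apply Var_nonneg).
    assert (Hm : 0 <= (m1 - m0) * (m1 - m0)) by apply Rle_0_sqr.
    rewrite Hid.
    assert (p * (E11 - m1 * m1) <= p * (2 * (E00 - m0 * m0) + 2 * ((E00 - 2 * E01 + E11) - (m1 - m0) * (m1 - m0)))).
    { apply Rmult_le_compat_l; lra. }
    set (V0 := E00 - m0 * m0) in *. set (Vd := (E00 - 2 * E01 + E11) - (m1 - m0) * (m1 - m0)) in *.
    set (M := (m1 - m0) * (m1 - m0)) in *.
    assert (Hp1 : p < 1) by (rewrite Hpq; lra).
    assert (E00 - 2 * E01 + E11 = Vd + M) by (unfold Vd; ring). rewrite H0.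
    assert (q * V0 <= V0) by nra. assert (p * q * M <= M) by nra.
    assert (p * (2 * V0 + 2 * Vd) <= 2 * V0 + 2 * Vd) by nra. lra. }
  assert (HK : 3 * (E00 - m0 * m0) + 3 * (E00 - 2 * E01 + E11) <= (3 * C / q + 3 / (p * q)) * Dall).
  { assert (Hq' : q * Dg <= Dall - p * q * (E00 - 2 * E01 + E11)) by lra.
    assert (Hdd : 0 <= E00 - 2 * E01 + E11) by (rewrite <- Hd2; apply piE_nonneg; auto; intros; apply Rle_0_sqr).
    assert (Dall * (3 * C / q) >= 3 * C * Dg).
    { unfold Rdiv. replace (3 * C * Dg) with ((3 * C * / q) * (q * Dg)) by (field; lra).
      apply Rle_ge. rewrite (Rmult_comm Dall). apply Rmult_le_compat_l.
      apply Rmult_le_pos. lra. left; apply Rinv_0_lt_compat; lra.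
      assert (0 <= p * q * (E00 - 2 * E01 + E11)) by (apply Rmult_le_pos; nra). lra. }
    assert (Dall * (3 / (p * q)) >= 3 * (E00 - 2 * E01 + E11)).
    { unfold Rdiv. replace (3 * (E00 - 2 * E01 + E11)) with ((3 * / (p * q)) * (p * q * (E00 - 2 * E01 + E11))) by (field; lra).
      apply Rle_ge. rewrite (Rmult_comm Dall). apply Rmult_le_compat_l.
      apply Rmult_le_pos. lra. left; apply Rinv_0_lt_compat; nra.
      assert (0 <= q * Dg) by nra. lra. }
    nra. }
  lra.
Qed.


Definition GapSet L := fun g => exists f : list bool -> R, Var q L f <> 0 /\ g = Dir q L f / Var q L f.

Lemma GapSet_lower L : exists c, 0 < c /\ is_lower_bound (GapSet L) c.
Proof. destruct (Poincare L) as [C [HC H]]. exists (/ C). split. apply Rinv_0_lt_compat; auto.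
  intros g [f [Hv ->]]. pose proof (Var_nonneg L f). rewrite Dir_DD.
  assert (0 < Var q L f) by lra. specialize (H f).
  apply (Rmult_le_reg_r (Var q L f)); auto. unfold Rdiv. rewrite Rmult_assoc, Rinv_l by lra.
  apply (Rmult_le_reg_l C); auto. rewrite <- Rmult_assoc, Rinv_r by lra. lra. Qed.

Lemma GapSet_nonempty L : (1 <= L)%nat -> exists g, GapSet L g.
Proof. intros HL. destruct L as [|L]; [lia|].
  set (f := fun s : list bool => if spin s 0 then 1 else 0).
  assert (Hv : Var q (S L) f = p * q).
  { unfold Var. rewrite !piE_S. unfold f, spin; simpl.
    rewrite !piE_const. unfold Defs.p; ring. }
  exists (Dir q (S L) f / Var q (S L) f). exists f. split; auto. rewrite Hv.
  pose proof (p_pos q hq1). nra. Qed.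

Lemma GapSet_incl L g : GapSet L g -> GapSet (S L) g.
Proof. intros [f [Hv ->]]. set (F := fun s : list bool => f (firstn L s)).
  assert (HV : Var q (S L) F = Var q L f).
  { unfold Var. rewrite (piE_last_const q L (fun s => F s * F s) (fun u => f u * f u)), (piE_last_const q L F f); auto.
    all: intros u b Hu; unfold F; rewrite firstn_app_last; auto. }
  assert (HD : Dir q (S L) F = Dir q L f).
  { unfold Dir. f_equal. apply piE_last_const. intros u b Hu.
    rewrite Lgen_last by auto. unfold F. rewrite !firstn_app_last by auto.
    rewrite (Lgen_ext q L _ f) by (auto; intros; rewrite firstn_app_last; auto).
    rewrite pq_same. ring. }
  exists F. rewrite HV, HD. auto. Qed.

Lemma Trel_mono L : (1 <= L)%nat -> Trel q L <= Trel q (S L).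
Proof. intros HL. unfold Trel, gap.
  fold (GapSet L). fold (GapSet (S L)).
  destruct (GapSet_lower (S L)) as [c [Hc Hlb]].
  assert (Hg1 : is_glb (GapSet (S L)) (Rinf (GapSet (S L)))).
  { apply glb_exists. apply GapSet_nonempty; lia. exists c; auto. }
  assert (Hg0 : is_glb (GapSet L) (Rinf (GapSet L))).
  { apply glb_exists. apply GapSet_nonempty; lia.
    exists (Rinf (GapSet (S L))). intros x Hx. apply Hg1. apply GapSet_incl; auto. }
  apply Rinv_le_contravar.
  - apply Rlt_le_trans with c; auto. apply Hg1. auto.
  - apply Hg0. intros x Hx. apply Hg1. apply GapSet_incl; auto. Qed.

End T.

Lemma cv_const c : Un_cv (fun _ => c) c.
Proof. intros e He. exists O. intros. unfold Rdist. rewrite Rminus_diag, Rabs_R0. lra. Qed.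

Lemma cv_lsum {A} (l : list A) F G : (forall a, In a l -> Un_cv (fun n => F n a) (G a)) ->
  Un_cv (fun n => lsum l (F n)) (lsum l G).
Proof. induction l; simpl; intros H. apply cv_const.
  apply CV_plus; auto. Qed.

Lemma cv_scal c u l : Un_cv u l -> Un_cv (fun n => c * u n) (c * l).
Proof. intros H. apply CV_mult; auto. apply cv_const. Qed.

Lemma Lim_spec u : (exists l, Un_cv u l) -> Un_cv u (Defs.Lim u).
Proof. intros H. unfold Defs.Lim. apply (epsilon_spec (inhabits 0) (fun l => Un_cv u l)). auto. Qed.

Lemma lsum_const {A} (l : list A) c : lsum l (fun _ => c) = INR (length l) * c.
Proof. induction l; simpl length; [simpl; ring|]. rewrite lsum_cons, IHl, S_INR. ring. Qed.

Lemma split_last (u : list bool) M : length u = S M -> exists s b, u = s ++ [b] /\ length s = M.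
Proof. intros H. destruct (exists_last (l := u)) as [s [b ->]]. intros ->; discriminate.
  exists s, b. split; auto. rewrite length_app in H. simpl in H. lia. Qed.

Lemma cons_rate_last_indep s b M : length s = M -> cons_rate (s ++ [b]) M = cons_rate (s ++ [false]) M.
Proof. intros <-. destruct s as [|x s] using rev_ind; [reflexivity|].
  rewrite length_app, Nat.add_1_r. cbn [cons_rate].
  rewrite (spin_app_l (s ++ [x]) (length s) b), (spin_app_l (s ++ [x]) (length s) false)
    by (rewrite length_app; simpl; lia). reflexivity. Qed.

Section H.
Variable q : R.
Hypothesis hq0 : 0 < q.
Hypothesis hq1 : q < / 2.
Notation p := (Defs.p q).

Lemma kill_super M kappa : 0 < kappa -> exists k : list bool -> R,
  (forall s, length s = M -> 0 <= k s) /\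
  (forall s, length s = M -> Lgen q M k s - kappa * cons_rate (s ++ [false]) M * k s <= -1).
Proof.
  revert kappa; induction M; intros kappa Hk.
  { exists (fun _ => / kappa). split. intros; left; apply Rinv_0_lt_compat; auto.
    intros s Hs. destruct s; [|discriminate]. unfold Lgen. simpl. field_simplify; lra. }
  destruct (IHM q hq0) as [k' [Hk'0 Hk'1]].
  pose proof (p_pos q hq1) as Hp. pose proof (q_lt_p q hq1) as Hqp.
  set (B := lsum (configs M) k').
  assert (HB : forall s, length s = M -> k' s <= B).
  { intros s Hs. apply lsum_single_le. apply configs_len; auto. intros b Hb; apply Hk'0, configs_len; auto. }
  set (alpha := (1 + p * B) / kappa).
  assert (HB0 : 0 <= B) by (unfold B; apply lsum_nonneg; intros; apply Hk'0, configs_len; auto).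
  assert (Ha : 0 <= alpha) by (unfold alpha; apply Rmult_le_pos; [nra| left; apply Rinv_0_lt_compat; auto]).
  exists (fun u => alpha + (if spin u M then k' (firstn M u) else 0)).
  split.
  { intros u Hu. destruct (spin u M); [|lra]. pose proof (Hk'0 (firstn M u)). 
    rewrite firstn_length in H. specialize (H ltac:(lia)). lra. }
  intros u Hu. destruct (split_last u M Hu) as [s [b [-> Hs]]].
  set (K := fun u : list bool => alpha + (if spin u M then k' (firstn M u) else 0)).
  assert (HK : forall v c, length v = M -> K (v ++ [c]) = 1 * (if c then k' v else 0) + alpha).
  { intros v c Hv. unfold K; cbv beta. rewrite <- Hv, spin_app_last, firstn_app_last by auto. ring. }
  rewrite Lgen_last by auto.
  rewrite (Lgen_ext q M _ (fun v => 1 * (if b then k' v else 0) + alpha)) by (auto; intros; apply HK; auto).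
  rewrite Lgen_lin, Lgen_const.
  rewrite !HK by auto.
  assert (Hc : cons_rate ((s ++ [b]) ++ [false]) (S M) = 1 - (if b then 1 else 0)).
  { cbn [cons_rate]. rewrite spin_app_l by (rewrite length_app; simpl; lia). subst M. rewrite spin_app_last. reflexivity. }
  rewrite Hc. rewrite (cons_rate_last_indep s b M Hs).
  pose proof (cons_rate_range (s ++ [false]) M) as Hcr.
  set (c := cons_rate (s ++ [false]) M) in *.
  pose proof (Hk'0 s Hs). pose proof (HB s Hs).
  assert (Hsp : forall b, spin (s ++ [b]) M = b) by (intros; rewrite <- Hs; apply spin_app_last).
  rewrite Hsp.
  destruct b.
  - pose proof (Hk'1 s Hs). fold c in H1.
    replace (Lgen q M (fun v => if true then k' v else 0) s) with (Lgen q M k' s) by reflexivity.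
    replace (1 - (if true then 1 else 0)) with 0 by (simpl; ring).
    match goal with |- ?X <= _ => assert (X = Lgen q M k' s - q * c * k' s) by (unfold Defs.p; ring) end.
    lra.
  - replace (Lgen q M (fun v => if false then k' v else 0) s) with (Lgen q M (fun _ => 0) s) by reflexivity.
    rewrite Lgen_const. replace (1 - (if false then 1 else 0)) with 1 by (simpl; ring).
    assert (kappa * alpha = 1 + p * B) by (unfold alpha; field; lra).
    assert (c * (p * k' s) <= 1 * (p * k' s)) by (apply Rmult_le_compat_r; [apply Rmult_le_pos|]; lra).
    assert (p * k' s <= p * B) by (apply Rmult_le_compat_l; lra).
    match goal with |- ?X <= _ => assert (X = c * (p * k' s) - kappa * alpha) by (unfold Defs.p; ring) end.
    lra.
Qed.

Lemma hit_super M : exists g : list bool -> R,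
  (forall u, length u = S M -> 0 <= g u) /\
  (forall u, length u = S M -> spin u M = false -> Lgen q (S M) g u <= -1).
Proof.
  destruct (kill_super M p (p_pos q hq1)) as [k [Hk0 Hk1]].
  exists (fun u => if spin u M then 0 else k (firstn M u)). split.
  { intros u Hu. destruct (spin u M). lra. apply Hk0. rewrite firstn_length. lia. }
  intros u Hu Ht. destruct (split_last u M Hu) as [s [b [-> Hs]]].
  assert (Hsp : forall b, spin (s ++ [b]) M = b) by (intros; rewrite <- Hs; apply spin_app_last).
  rewrite Hsp in Ht. subst b.
  rewrite Lgen_last by auto.
  rewrite (Lgen_ext q M _ k) by (auto; intros v Hv; rewrite <- Hv, spin_app_last, firstn_app_last; auto).
  rewrite !Hsp, !firstn_app_last by auto.
  specialize (Hk1 s Hs). 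
  match goal with |- ?X <= _ => assert (X = Lgen q M k s - p * cons_rate (s ++ [false]) M * k s) by (unfold Defs.p; ring) end.
  lra. Qed.

Lemma Lgen_lower L d u : length u = L -> (forall v, length v = L -> 0 <= d v) ->
  - INR L * d u <= Lgen q L d u.
Proof. intros Hu Hd. unfold Lgen.
  replace (- INR L * d u) with (lsum (seq 0 L) (fun _ => - d u)) by (rewrite lsum_const, length_seq; ring).
  apply lsum_le. intros i Hi. pose proof (cons_rate_range u i).
  pose proof (Hd u Hu). pose proof (Hd (upd u i true)) as Ha1. pose proof (Hd (upd u i false)) as Ha2.
  rewrite upd_length in Ha1, Ha2. specialize (Ha1 Hu). specialize (Ha2 Hu).
  pose proof (p_pos q hq1).
  assert (0 <= p * d (upd u i true) + q * d (upd u i false)) by (apply Rplus_le_le_0_compat; apply Rmult_le_pos; lra).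
  assert (cons_rate u i * (p * d (upd u i true) + q * d (upd u i false)) >= 0) by (apply Rle_ge, Rmult_le_pos; lra).
  assert (cons_rate u i * d u <= 1 * d u) by (apply Rmult_le_compat_r; lra).
  nra. Qed.

Lemma Lgen_min L d s : length s = L -> (forall v, length v = L -> d s <= d v) -> 0 <= Lgen q L d s.
Proof. intros Hs H. unfold Lgen. apply lsum_nonneg. intros i _.
  pose proof (cons_rate_range s i). pose proof (p_pos q hq1).
  pose proof (H (upd s i true)) as Ha1. pose proof (H (upd s i false)) as Ha2.
  rewrite upd_length in Ha1, Ha2. specialize (Ha1 Hs). specialize (Ha2 Hs).
  apply Rmult_le_pos. lra.
  match goal with |- 0 <= ?X => assert (Heq : X = p * (d (upd s i true) - d s) + q * (d (upd s i false) - d s)) by (unfold Defs.p; ring) end.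
  rewrite Heq. apply Rplus_le_le_0_compat; apply Rmult_le_pos; lra. Qed.

Definition lam M := INR (S M) + 1.
Lemma lam_pos M : 0 < lam M.
Proof. unfold lam. pose proof (pos_INR (S M)). lra. Qed.

Definition Top M (h : list bool -> R) u := if spin u M then 0 else h u + (1 + Lgen q (S M) h u) / lam M.
Fixpoint hseq M n : list bool -> R := match n with O => fun _ => 0 | S n => Top M (hseq M n) end.

Lemma Top_mono M h1 h2 : (forall v, length v = S M -> h1 v <= h2 v) ->
  forall u, length u = S M -> Top M h1 u <= Top M h2 u.
Proof. intros H u Hu. unfold Top. destruct (spin u M); [lra|].
  set (d := fun v => -1 * h1 v + h2 v).
  assert (HL : Lgen q (S M) d u = -1 * Lgen q (S M) h1 u + Lgen q (S M) h2 u) by apply Lgen_lin.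
  pose proof (Lgen_lower (S M) d u Hu) as Hlow.
  assert (Hd : forall v, length v = S M -> 0 <= d v) by (intros v Hv; unfold d; specialize (H v Hv); lra).
  specialize (Hlow Hd). specialize (Hd u Hu).
  pose proof (lam_pos M). unfold lam in *. pose proof (pos_INR (S M)).
  assert (- INR (S M) * d u / (INR (S M) + 1) >= - d u).
  { apply Rle_ge. apply (Rmult_le_reg_r (INR (S M) + 1)); auto. unfold Rdiv.
    rewrite Rmult_assoc, Rinv_l by lra. nra. }
  assert (Lgen q (S M) d u / (INR (S M) + 1) >= - INR (S M) * d u / (INR (S M) + 1)).
  { apply Rle_ge. unfold Rdiv. apply Rmult_le_compat_r; auto. left; apply Rinv_0_lt_compat; lra. }
  assert ((1 + Lgen q (S M) h2 u) / (INR (S M) + 1) - (1 + Lgen q (S M) h1 u) / (INR (S M) + 1)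
          = Lgen q (S M) d u / (INR (S M) + 1)) by (rewrite HL; field; lra).
  unfold d in *. lra. Qed.

Lemma hseq_le_super M g : (forall u, length u = S M -> 0 <= g u) ->
  (forall u, length u = S M -> spin u M = false -> Lgen q (S M) g u <= -1) ->
  forall n u, length u = S M -> hseq M n u <= g u.
Proof. intros Hg0 Hg1 n. induction n; intros u Hu; simpl. auto.
  apply Rle_trans with (Top M g u). apply Top_mono; auto.
  unfold Top. destruct (spin u M) eqn:E. auto.
  specialize (Hg1 u Hu E). pose proof (lam_pos M).
  assert ((1 + Lgen q (S M) g u) / lam M <= 0).
  { unfold Rdiv. replace 0 with (0 * / lam M) by ring. apply Rmult_le_compat_r. left; apply Rinv_0_lt_compat; auto. lra. }
  lra. Qed.

Lemma Lgen_scal L a f s : Lgen q L (fun v => a * f v) s = a * Lgen q L f s.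
Proof. unfold Lgen. rewrite <- lsum_scal. apply lsum_ext; intros; ring. Qed.
Lemma Lgen_plus L f g s : Lgen q L (fun v => f v + g v) s = Lgen q L f s + Lgen q L g s.
Proof. unfold Lgen. rewrite <- lsum_plus. apply lsum_ext; intros; ring. Qed.

Lemma hseq_incr M n u : length u = S M -> hseq M n u <= hseq M (S n) u.
Proof. revert u; induction n; intros u Hu.
  - simpl. unfold Top. destruct (spin u M). lra. rewrite Lgen_const.
    pose proof (lam_pos M). unfold Rdiv. 
    assert (0 <= (1 + 0) * / lam M) by (apply Rmult_le_pos; [lra| left; apply Rinv_0_lt_compat; auto]). lra.
  - change (hseq M (S (S n)) u) with (Top M (hseq M (S n)) u). simpl hseq. apply Top_mono; auto. Qed.

Lemma hseq_nonneg M n u : length u = S M -> 0 <= hseq M n u.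
Proof. intros Hu. induction n. simpl; lra. pose proof (hseq_incr M n u Hu). lra. Qed.

Lemma cv_ge u l a : Un_cv u l -> (forall n, a <= u n) -> a <= l.
Proof. intros H Ha. destruct (Rle_dec a l) as [|Hn]; auto. exfalso.
  destruct (H (a - l)) as [N HN]. lra. specialize (HN N (le_n N)). specialize (Ha N).
  unfold Rdist in HN. rewrite Rabs_right in HN by lra. lra. Qed.

Lemma list_min {A} (l : list A) f : l <> [] -> exists x, In x l /\ forall y, In y l -> f x <= f y.
Proof. induction l as [|a l IH]; intros Hl; [congruence|].
  destruct l as [|b l'].
  - exists a. split. left; auto. intros y [<-|[]]. lra.
  - destruct IH as [x [Hx Hm]]. discriminate.
    destruct (Rle_dec (f a) (f x)).
    + exists a. split. left; auto. intros y [<-|Hy]. lra. specialize (Hm y Hy). lra.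
    + exists x. split. right; auto. intros y [<-|Hy]. lra. auto. Qed.

Lemma configs_nonempty L : configs L <> [].
Proof. intros H. assert (In (repeat false L) (configs L)) by (apply configs_len; apply repeat_length).
  rewrite H in H0. contradiction. Qed.

Lemma compare M h g :
  (forall u, length u = S M -> spin u M = true -> h u = 0) ->
  (forall u, length u = S M -> spin u M = false -> Lgen q (S M) h u = -1) ->
  (forall u, length u = S M -> 0 <= g u) ->
  (forall u, length u = S M -> spin u M = false -> Lgen q (S M) g u <= -1) ->
  forall u, length u = S M -> h u <= g u.
Proof. intros Hh0 Hh1 Hg0 Hg1.
  assert (Heps : forall eps, 0 < eps -> forall u, length u = S M -> h u <= (1 + eps) * g u).
  { intros eps He.
    set (d := fun v => (1 + eps) * g v + -1 * h v).
    destruct (list_min (configs (S M)) d (configs_nonempty _)) as [s0 [Hs0 Hmin]].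
    apply configs_len in Hs0.
    assert (Hd0 : 0 <= d s0).
    { destruct (Rle_dec 0 (d s0)) as [|Hn]; auto. exfalso.
      destruct (spin s0 M) eqn:E.
      - apply Hn. unfold d. rewrite Hh0 by auto. pose proof (Hg0 s0 Hs0). nra.
      - assert (0 <= Lgen q (S M) d s0).
        { apply Lgen_min; auto. intros v Hv. apply Hmin, configs_len; auto. }
        unfold d in H. rewrite Lgen_plus, !Lgen_scal in H. rewrite Hh1 in H by auto.
        specialize (Hg1 s0 Hs0 E). nra. }
    intros u Hu. assert (d s0 <= d u) by (apply Hmin, configs_len; auto). unfold d in *. lra. }
  intros u Hu. destruct (Rle_dec (h u) (g u)) as [|Hn]; auto. exfalso.
  pose proof (Hg0 u Hu).
  set (eps := (h u - g u) / (2 * (g u + 1))).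
  assert (He : 0 < eps) by (unfold eps; apply Rdiv_lt_0_compat; lra).
  specialize (Heps eps He u Hu).
  assert (eps * g u < h u - g u).
  { unfold eps. apply (Rmult_lt_reg_r (2 * (g u + 1))). lra.
    unfold Rdiv. replace ((h u - g u) * / (2 * (g u + 1)) * g u * (2 * (g u + 1))) with ((h u - g u) * g u) by (field; lra).
    nra. }
  nra. Qed.

Definition hlim M u := Defs.Lim (fun n => hseq M n u).

Lemma hlim_cv M u : length u = S M -> Un_cv (fun n => hseq M n u) (hlim M u).
Proof. intros Hu. apply Lim_spec.
  destruct (hit_super M) as [g [Hg0 Hg1]].
  destruct (growing_cv (fun n => hseq M n u)) as [l Hl].
  - intros n. apply hseq_incr; auto.
  - exists (g u). intros x [n ->]. apply (hseq_le_super M g); auto.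
  - exists l; auto. Qed.

Lemma hlim_props M :
  (forall u, length u = S M -> 0 <= hlim M u) /\
  (forall u, length u = S M -> spin u M = true -> hlim M u = 0) /\
  (forall u, length u = S M -> spin u M = false -> Lgen q (S M) (hlim M) u = -1).
Proof. split; [|split].
  - intros u Hu. apply (cv_ge _ _ 0 (hlim_cv M u Hu)). intros; apply hseq_nonneg; auto.
  - intros u Hu Ht. pose proof (CV_shift' _ 1 _ (hlim_cv M u Hu)).
    eapply UL_sequence. apply H.
    apply (Un_cv_ext (fun _ => 0)). intros n. rewrite Nat.add_1_r. simpl. unfold Top. rewrite Ht. auto.
    apply cv_const.
  - intros u Hu Ht. pose proof (CV_shift' _ 1 _ (hlim_cv M u Hu)) as H1.
    assert (H2 : Un_cv (fun n => hseq M (n + 1) u) (hlim M u + (1 + Lgen q (S M) (hlim M) u) / lam M)).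
    { apply (Un_cv_ext (fun n => hseq M n u + (1 + Lgen q (S M) (hseq M n) u) * / lam M)).
      intros n. rewrite Nat.add_1_r. simpl. unfold Top. rewrite Ht. reflexivity.
      apply CV_plus. apply hlim_cv; auto. apply CV_mult; [|apply cv_const].
      apply CV_plus. apply cv_const. unfold Lgen. apply cv_lsum. intros i Hi.
      apply cv_scal. apply CV_minus. apply CV_plus; apply cv_scal; apply hlim_cv; rewrite upd_length; auto.
      apply hlim_cv; auto. }
    pose proof (UL_sequence _ _ _ H1 H2). pose proof (lam_pos M).
    assert ((1 + Lgen q (S M) (hlim M) u) / lam M = 0) by lra.
    unfold Rdiv in H3. apply Rmult_integral in H3. destruct H3 as [|H3]. lra.
    exfalso. apply Rinv_neq_0_compat in H3; auto. lra. Qed.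

Definition HitSet L := fun v => exists h : list bool -> R,
    (forall s, In s (configs L) -> 0 <= h s) /\
    (forall s, In s (configs L) -> target L s -> h s = 0) /\
    (forall s, In s (configs L) -> ~ target L s ->
        lsum (configs L) (fun u => Qmat q L s u * h u) = -1) /\
    v = h (one_zero L).

Lemma HitSet_sol M v : HitSet (S M) v -> exists h,
  (forall u, length u = S M -> 0 <= h u) /\
  (forall u, length u = S M -> spin u M = true -> h u = 0) /\
  (forall u, length u = S M -> spin u M = false -> Lgen q (S M) h u = -1) /\
  v = h (one_zero (S M)).
Proof. intros [h [H0 [H1 [H2 H3]]]]. exists h. unfold target in *.
  replace (S M - 1)%nat with M in * by lia. split; [|split; [|split]]; auto.
  - intros u Hu; apply H0, configs_len; auto.
  - intros u Hu; apply H1, configs_len; auto.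
  - intros u Hu Ht. rewrite <- Qmat_sum by auto. apply H2. apply configs_len; auto. congruence. Qed.

Lemma HitSet_nonempty M : exists v, HitSet (S M) v.
Proof. destruct (hlim_props M) as [H0 [H1 H2]]. exists (hlim M (one_zero (S M))), (hlim M).
  unfold target. replace (S M - 1)%nat with M by lia. split; [|split; [|split]]; auto.
  - intros s Hs; apply H0, configs_len; auto.
  - intros s Hs; apply H1, configs_len; auto.
  - intros s Hs Ht. apply configs_len in Hs. rewrite Qmat_sum by auto. apply H2; auto.
    destruct (spin s M); auto. congruence. Qed.

Lemma one_zero_len M : length (one_zero (S M)) = S M.
Proof. unfold one_zero. rewrite length_app, repeat_length. simpl. lia. Qed.

Lemma HitSet_compare M v w : HitSet (S (S M)) v -> HitSet (S M) w -> w <= v.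
Proof. intros Hv Hw.
  destruct (HitSet_sol (S M) v Hv) as [h [Hh0 [Hh1 [Hh2 ->]]]].
  destruct (HitSet_sol M w Hw) as [k [Hk0 [Hk1 [Hk2 ->]]]].
  set (g := fun u => if spin u M then 0 else h (upd u M true ++ [false])).
  assert (Hg : k (one_zero (S M)) <= g (one_zero (S M))).
  { apply (compare M k g); auto.
    - intros u Hu. unfold g. destruct (spin u M). lra. apply Hh0. rewrite length_app, upd_length; simpl; lia.
    - intros u Hu Ht. destruct (split_last u M Hu) as [s [b [-> Hs]]].
      assert (Hsp : forall b, spin (s ++ [b]) M = b) by (intros; rewrite <- Hs; apply spin_app_last).
      rewrite Hsp in Ht. subst b.
      rewrite Lgen_last by auto.
      rewrite (Lgen_ext q M _ (fun v => h ((v ++ [true]) ++ [false]))).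
      2: auto.
      2:{ intros v0 Hv0. unfold g. rewrite <- Hv0, spin_app_last, upd_app_last. reflexivity. }
      unfold g. rewrite !Hsp.
      assert (Hup : upd (s ++ [false]) M true = s ++ [true]) by (rewrite <- Hs; apply upd_app_last).
      rewrite Hup.
      set (x := (s ++ [true]) ++ [false]).
      assert (Hx : length x = S (S M)) by (unfold x; rewrite !length_app; simpl; lia).
      assert (Hxs : spin x (S M) = false).
      { unfold x. replace (S M) with (length (s ++ [true])) by (rewrite length_app; simpl; lia). apply spin_app_last. }
      specialize (Hh2 x Hx Hxs). unfold x in Hh2.
      rewrite Lgen_last in Hh2 by (rewrite length_app; simpl; lia).
      rewrite Lgen_last in Hh2 by auto.
      assert (Hc0 : cons_rate ((s ++ [true]) ++ [false]) (S M) = 0).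
      { cbn [cons_rate]. rewrite spin_app_l by (rewrite length_app; simpl; lia). rewrite Hsp. ring. }
      rewrite Hc0 in Hh2. cbv beta in Hh2. unfold x in *. rewrite (cons_rate_last_indep s true M Hs) in Hh2.
      pose proof (cons_rate_range (s ++ [false]) M).
      set (c := cons_rate (s ++ [false]) M) in *.
      set (A := Lgen q M (fun v => h ((v ++ [true]) ++ [false])) s) in *.
      assert (HX : 0 <= h ((s ++ [true]) ++ [false])) by (apply Hh0; rewrite !length_app; simpl; lia).
      assert (HY : 0 <= h ((s ++ [false]) ++ [false])) by (apply Hh0; rewrite !length_app; simpl; lia).
      set (X := h ((s ++ [true]) ++ [false])) in *. set (Y := h ((s ++ [false]) ++ [false])) in *.
      pose proof (q_lt_p q hq1).
      assert (Hh2' : A + c * q * (Y - X) = -1) by (rewrite <- Hh2; unfold Defs.p; ring).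
      match goal with |- ?Z <= _ => assert (Z = A - c * p * X) by (unfold Defs.p; ring) end.
      assert (c * (p - q) * X >= 0) by (apply Rle_ge; apply Rmult_le_pos; [apply Rmult_le_pos|]; lra).
      assert (c * q * Y >= 0) by (apply Rle_ge; apply Rmult_le_pos; [apply Rmult_le_pos|]; lra).
      nra.
    - apply one_zero_len. }
  assert (E1 : one_zero (S M) = repeat true M ++ [false]).
  { unfold one_zero. replace (S M - 1)%nat with M by lia. reflexivity. }
  assert (E2 : one_zero (S (S M)) = (repeat true M ++ [true]) ++ [false]).
  { unfold one_zero. replace (S (S M) - 1)%nat with (S M) by lia. rewrite <- repeat_cons. reflexivity. }
  rewrite E2. rewrite E1 in Hg. unfold g in Hg.
  assert (Hsp : spin (repeat true M ++ [false]) M = false).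
  { rewrite <- (repeat_length true M) at 2. apply spin_app_last. }
  assert (Hup : upd (repeat true M ++ [false]) M true = repeat true M ++ [true]).
  { rewrite <- (repeat_length true M) at 2. apply upd_app_last. }
  rewrite Hsp, Hup in Hg. rewrite E1. exact Hg.
Qed.

Lemma Thit_mono L : (1 <= L)%nat -> Thit q L <= Thit q (S L).
Proof. intros HL. destruct L as [|M]; [lia|].
  unfold Thit. fold (HitSet (S M)). fold (HitSet (S (S M))).
  destruct (HitSet_nonempty M) as [w Hw].
  destruct (HitSet_nonempty (S M)) as [v Hv].
  assert (Hlb : forall L x, HitSet (S L) x -> 0 <= x).
  { intros L0 x [h [H0 [_ [_ ->]]]]. apply H0. apply configs_len. apply one_zero_len. }
  assert (Hg1 : is_glb (HitSet (S (S M))) (Rinf (HitSet (S (S M))))).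
  { apply glb_exists. eauto. exists 0. intros x Hx; eapply Hlb; eauto. }
  assert (Hg0 : is_glb (HitSet (S M)) (Rinf (HitSet (S M)))).
  { apply glb_exists. eauto. exists 0. intros x Hx; eapply Hlb; eauto. }
  apply Hg1. intros x Hx. apply Rle_trans with w. apply Hg0; auto. apply (HitSet_compare M); auto.
Qed.

End H.

From Coquelicot Require Import Coquelicot.
Import ListNotations.
Open Scope R_scope.

Section Ser.
Variable q : R.
Hypothesis hq0 : 0 < q.
Hypothesis hq1 : q < / 2.
Notation p := (Defs.p q).
Variable L : nat.

Definition ind (x u : list bool) : R := if cfg_eqb x u then 1 else 0.

Lemma ind_nonneg x u : 0 <= ind x u.
Proof. unfold ind; destruct (cfg_eqb x u); lra. Qed.

Lemma lsum_ind x : length x = L -> lsum (configs L) (fun u => ind x u) = 1.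
Proof. intros H. rewrite <- (lsum_configs_ind L x (fun _ => 1) H). apply lsum_ext; intros; unfold ind; ring. Qed.

Lemma Qmat_rowabs x : length x = L -> lsum (configs L) (fun u => Rabs (Qmat q L x u)) <= 2 * INR L.
Proof. intros Hx. pose proof (p_pos q hq1) as Hp.
  apply Rle_trans with (lsum (configs L) (fun u => lsum (seq 0 L) (fun i =>
     p * ind (upd x i true) u + q * ind (upd x i false) u + ind x u))).
  { apply lsum_le. intros u _. unfold Qmat, Lgen. eapply Rle_trans. apply lsum_abs.
    apply lsum_le. intros i _. pose proof (cons_rate_range x i).
    pose proof (ind_nonneg (upd x i true) u). pose proof (ind_nonneg (upd x i false) u). pose proof (ind_nonneg x u).
    unfold ind in *. rewrite Rabs_mult. rewrite (Rabs_right (cons_rate x i)) by lra.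
    set (A := (if cfg_eqb (upd x i true) u then 1 else 0)) in *.
    set (B := (if cfg_eqb (upd x i false) u then 1 else 0)) in *.
    set (C := (if cfg_eqb x u then 1 else 0)) in *.
    assert (Rabs (p * A + q * B - C) <= p * A + q * B + C).
    { apply Rabs_le. split; nra. }
    assert (0 <= p * A + q * B + C) by nra. 
    apply Rle_trans with (1 * Rabs (p * A + q * B - C)). apply Rmult_le_compat_r. apply Rabs_pos. lra. lra. }
  rewrite lsum_exch. rewrite (lsum_ext _ _ (fun _ => 2)).
  rewrite lsum_const, length_seq. lra.
  intros i _. rewrite !lsum_plus, !lsum_scal, !lsum_ind; auto; try rewrite upd_length; auto.
  rewrite pq_same. ring. Qed.

Definition BB := 2 * INR L + 1.
Lemma BB_pos : 0 < BB.
Proof. unfold BB. pose proof (pos_INR L). lra. Qed.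

Lemma Qpow_bound n x s : length x = L -> Rabs (Qpow q L n x s) <= BB ^ n.
Proof. revert x; induction n; intros x Hx; simpl.
  destruct (cfg_eqb x s); rewrite ?Rabs_R1, ?Rabs_R0; lra.
  eapply Rle_trans. apply lsum_abs.
  apply Rle_trans with (lsum (configs L) (fun u => Rabs (Qmat q L x u) * BB ^ n)).
  { apply lsum_le. intros u Hu. rewrite Rabs_mult. apply Rmult_le_compat_l. apply Rabs_pos.
    apply IHn. apply configs_len; auto. }
  rewrite lsum_scalr. pose proof (Qmat_rowabs x Hx). pose proof BB_pos.
  assert (0 < BB ^ n) by (apply pow_lt; auto).
  apply Rmult_le_compat_r. lra. unfold BB. lra. Qed.

Definition acoef x s k := Qpow q L k x s / INR (fact k).

Lemma acoef_radius x s t : length x = L -> Rbar_lt (Rabs t) (CV_radius (acoef x s)).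
Proof. intros Hx. set (r := Rabs t + 1).
  assert (Hr : Rbar_le r (CV_radius (acoef x s))).
  { apply (proj1 (CV_radius_bounded (acoef x s))).
    destruct (maj_by_pos (fun n => (BB * r) ^ n / INR (fact n))) as [M [HM0 HM]].
    { exists 0. apply cv_speed_pow_fact. }
    exists M. intros n. specialize (HM n). eapply Rle_trans; [|exact HM].
    unfold acoef. pose proof (Qpow_bound n x s Hx).
    assert (0 < INR (fact n)) by (apply lt_0_INR, lt_O_fact).
    assert (0 <= r) by (unfold r; pose proof (Rabs_pos t); lra).
    rewrite Rpow_mult_distr. unfold Rdiv.
    rewrite !Rabs_mult, Rabs_inv, (Rabs_right (INR (fact n))) by lra.
    rewrite (Rabs_right (BB ^ n)) by (apply Rle_ge, pow_le; left; apply BB_pos).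
    assert (0 < / INR (fact n)) by (apply Rinv_0_lt_compat; auto).
    pose proof (Rabs_pos (r ^ n)).
    replace (BB ^ n * Rabs (r ^ n) * / INR (fact n)) with (BB ^ n * / INR (fact n) * Rabs (r ^ n)) by ring.
    apply Rmult_le_compat_r; auto. apply Rmult_le_compat_r; lra. }
  eapply Rbar_lt_le_trans; [|exact Hr]. simpl. unfold r. lra. Qed.

Lemma acoef_ex x s t : length x = L -> ex_pseries (acoef x s) t.
Proof. intros Hx. apply ex_pseries_R. apply ex_series_Rabs. apply CV_disk_inside. apply acoef_radius; auto. Qed.

Lemma Pt_cv_PS x s t : length x = L ->
  Un_cv (fun N => sum_f_R0 (fun n => t ^ n / INR (fact n) * Qpow q L n x s) N) (PSeries (acoef x s) t).
Proof. intros Hx. pose proof (PSeries_correct _ _ (acoef_ex x s t Hx)) as H.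
  apply is_pseries_R in H. apply is_series_Reals in H.
  intros e He. destruct (H e He) as [N HN]. exists N. intros n Hn. specialize (HN n Hn).
  rewrite (sum_eq _ (fun n0 => acoef x s n0 * t ^ n0)). exact HN.
  intros. unfold acoef. unfold Rdiv. ring. Qed.

Lemma Pt_PS x s t : length x = L -> Pt q L t x s = PSeries (acoef x s) t.
Proof. intros Hx. unfold Pt. eapply UL_sequence. apply Lim_spec. eexists. apply Pt_cv_PS; auto.
  apply Pt_cv_PS; auto. Qed.

Lemma Pt_cv x s t : length x = L ->
  Un_cv (fun N => sum_f_R0 (fun n => t ^ n / INR (fact n) * Qpow q L n x s) N) (Pt q L t x s).
Proof. intros Hx. rewrite Pt_PS by auto. apply Pt_cv_PS; auto. Qed.


Lemma ex_pseries_zero t : ex_pseries (fun _ : nat => 0) t.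
Proof. apply ex_pseries_R. exists 0. apply is_series_Reals. intros e He. exists 0%nat. intros n _.
  rewrite (sum_eq _ (fun _ => 0)) by (intros; ring). rewrite sum_cte. unfold R_dist.
  rewrite Rmult_0_l, Rminus_diag, Rabs_R0. auto. Qed.

Lemma PSeries_lsum {A} (l : list A) (c : A -> R) (b : A -> nat -> R) t :
  (forall u, In u l -> ex_pseries (b u) t) ->
  ex_pseries (fun k => lsum l (fun u => c u * b u k)) t /\
  PSeries (fun k => lsum l (fun u => c u * b u k)) t = lsum l (fun u => c u * PSeries (b u) t).
Proof. induction l as [|a l IH]; intros H.
  - split. apply ex_pseries_zero. rewrite lsum_nil. apply PSeries_const_0.
  - destruct IH as [IH1 IH2]. intros; apply H; right; auto.
    assert (Ha : ex_pseries (PS_scal (c a) (b a)) t) by (apply ex_pseries_scal; [apply Rmult_comm| apply H; left; auto]).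
    split.
    + eapply ex_pseries_ext. 2: apply (ex_pseries_plus _ _ _ Ha IH1). intros n. reflexivity.
    + rewrite lsum_cons. rewrite <- IH2. rewrite <- PSeries_scal. rewrite <- PSeries_plus; auto.
      all: try (apply PSeries_ext; intros n; reflexivity). Qed.

Lemma PS_derive_acoef x s k : length x = L ->
  PS_derive (acoef x s) k = lsum (configs L) (fun u => Qmat q L x u * acoef u s k).
Proof. intros Hx. unfold PS_derive, acoef. simpl Qpow. rewrite fact_simpl, mult_INR.
  assert (0 < INR (fact k)) by (apply lt_0_INR, lt_O_fact).
  assert (0 < INR (S k)) by (apply lt_0_INR; lia).
  rewrite (lsum_ext _ (fun u => Qmat q L x u * (Qpow q L k u s / INR (fact k)))
     (fun u => (Qmat q L x u * Qpow q L k u s) * / INR (fact k))) by (intros; unfold Rdiv; ring).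
  rewrite lsum_scalr. field; lra. Qed.

Lemma is_derive_Pt x s t : length x = L ->
  is_derive (fun tau => Pt q L tau x s) t (Lgen q L (fun u => Pt q L t u s) x).
Proof. intros Hx.
  apply (is_derive_ext (fun tau => PSeries (acoef x s) tau)). intros; rewrite Pt_PS; auto.
  assert (E : PSeries (PS_derive (acoef x s)) t = Lgen q L (fun u => Pt q L t u s) x).
  { rewrite (PSeries_ext _ (fun k => lsum (configs L) (fun u => Qmat q L x u * acoef u s k)))
      by (intros; apply PS_derive_acoef; auto).
    rewrite (proj2 (PSeries_lsum (configs L) (Qmat q L x) (fun u k => acoef u s k) t
      (fun u Hu => acoef_ex u s t (proj1 (configs_len L u) Hu)))).
    rewrite <- Qmat_sum by auto. apply lsum_ext; intros u Hu. rewrite Pt_PS; auto. apply configs_len; auto. }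
  rewrite <- E. apply is_derive_PSeries. apply acoef_radius; auto. Qed.

Lemma Pt_0 x s : length x = L -> Pt q L 0 x s = ind x s.
Proof. intros Hx. rewrite Pt_PS, PSeries_0 by auto. unfold acoef, ind. simpl. unfold Rdiv. rewrite Rinv_1. ring. Qed.

End Ser.

Ltac rreq := match goal with |- ?a = ?b => change (@eq R a b) end; ring.

Lemma is_derive_lsum {A} (l : list A) (f : A -> R -> R) (df : A -> R) t :
  (forall a, In a l -> is_derive (f a) t (df a)) ->
  is_derive (fun tau => lsum l (fun a => f a tau)) t (lsum l df).
Proof. induction l as [|a l IH]; intros H; simpl.
  - apply (is_derive_const (V := R_NormedModule) 0 t).
  - apply (is_derive_plus (f a) (fun tau => lsum l (fun a => f a tau))).
    apply H; left; auto. apply IH; intros; apply H; right; auto. Qed.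

Lemma is_derive_mul (f g : R -> R) t df dg : is_derive f t df -> is_derive g t dg ->
  is_derive (fun x => f x * g x) t (df * g t + f t * dg).
Proof. intros. apply (is_derive_mult f g); auto. intros; apply Rmult_comm. Qed.

Lemma is_derive_cst (c t : R) : is_derive (fun _ => c) t 0.
Proof. apply (is_derive_const (V := R_NormedModule) c t). Qed.

Lemma is_derive_sub (f : R -> R) c t df : is_derive f t df -> is_derive (fun x => f x - c) t df.
Proof. intros H. replace df with (df - 0) by ring.
  apply (is_derive_minus f (fun _ => c)); auto. apply is_derive_cst. Qed.

Lemma is_derive_val (f : R -> R) t l l' : is_derive f t l -> l = l' -> is_derive f t l'.
Proof. intros H ->; auto. Qed.

Section Mix.
Variable q : R.
Hypothesis hq0 : 0 < q.
Hypothesis hq1 : q < / 2.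
Notation p := (Defs.p q).
Variable L : nat.

Lemma Lgen_lsum {A} (l : list A) (G : A -> list bool -> R) x :
  Lgen q L (fun u => lsum l (fun a => G a u)) x = lsum l (fun a => Lgen q L (G a) x).
Proof. unfold Lgen. rewrite lsum_exch. apply lsum_ext; intros i _.
  rewrite lsum_scal, lsum_minus, lsum_plus, !lsum_scal. reflexivity. Qed.

Lemma piE_Lgen_zero f : piE q L (Lgen q L f) = 0.
Proof. unfold Lgen. 
  unfold piE. rewrite (lsum_ext _ _ (fun s => lsum (seq 0 L) (fun i => piL q s * (cons_rate s i *
     (p * f (upd s i true) + q * f (upd s i false) - f s))))) by (intros; rewrite lsum_scal; auto).
  rewrite lsum_exch. apply lsum_zero. intros i Hi. apply in_seq in Hi.
  change (piE q L (fun s => cons_rate s i * (p * f (upd s i true) + q * f (upd s i false) - f s)) = 0).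
  rewrite (piE_resample q L i) by lia. rewrite <- (piE_const q L 0). apply piE_ext. intros s _.
  rewrite !upd_upd, !cons_rate_upd. unfold Defs.p; ring. Qed.

Variable g : list bool -> R.
Definition FF tau x := lsum (configs L) (fun s => Pt q L tau x s * g s).
Definition mm := piE q L g.

Lemma is_derive_FF x t : length x = L -> is_derive (fun tau => FF tau x) t (Lgen q L (FF t) x).
Proof. intros Hx. unfold FF.
  apply (is_derive_val _ _ (lsum (configs L) (fun s => Lgen q L (fun u => Pt q L t u s) x * g s))).
  apply is_derive_lsum. intros s _.
  apply (is_derive_ext (fun tau => g s * Pt q L tau x s)). intros; apply Rmult_comm.
  apply (is_derive_val _ _ (g s * Lgen q L (fun u => Pt q L t u s) x)).
  apply is_derive_scal. apply is_derive_Pt; auto. apply Rmult_comm.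
  rewrite Lgen_lsum. apply lsum_ext; intros s _.
  rewrite (Lgen_ext q L (fun u => Pt q L t u s * g s) (fun u => g s * Pt q L t u s)) by (auto; intros; ring).
  rewrite Lgen_scal. ring. Qed.

Lemma FF_0 x : length x = L -> FF 0 x = g x.
Proof. intros Hx. unfold FF. rewrite <- (lsum_configs_ind L x g Hx). apply lsum_ext; intros s Hs.
  rewrite Pt_0 by auto. unfold ind. reflexivity. Qed.

Lemma mean_pres t : 0 <= t -> piE q L (FF t) = mm.
Proof. intros Ht. destruct Ht as [Ht| <-].
  2:{ unfold mm. apply piE_ext; intros; apply FF_0; auto. }
  transitivity (piE q L (FF 0)). 2:{ unfold mm. apply piE_ext; intros; apply FF_0; auto. }
  symmetry. apply (eq_is_derive (fun tau => piE q L (FF tau))); auto.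
  intros tau _. unfold piE.
  apply (is_derive_val _ _ (lsum (configs L) (fun x => piL q x * Lgen q L (FF tau) x))).
  apply is_derive_lsum. intros x Hx. apply is_derive_scal. apply is_derive_FF. apply configs_len; auto.
  apply piE_Lgen_zero. Qed.

Definition psi tau := piE q L (fun x => (FF tau x - mm) * (FF tau x - mm)).

Lemma is_derive_psi t : is_derive psi t (2 * piE q L (fun x => (FF t x - mm) * Lgen q L (FF t) x)).
Proof. unfold psi, piE.
  apply (is_derive_val _ _ (lsum (configs L) (fun x => piL q x * (2 * ((FF t x - mm) * Lgen q L (FF t) x))))).
  apply is_derive_lsum. intros x Hx. apply is_derive_scal.
  apply (is_derive_val _ _ (Lgen q L (FF t) x * (FF t x - mm) + (FF t x - mm) * Lgen q L (FF t) x)).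
  apply (is_derive_mul (fun tau => FF tau x - mm) (fun tau => FF tau x - mm));
    apply (is_derive_sub (fun tau => FF tau x) mm); apply is_derive_FF; apply configs_len; auto.
  rreq. rewrite <- lsum_scal. apply lsum_ext; intros; ring. Qed.

Variable C : R.
Hypothesis HC : 0 < C.
Hypothesis HP : forall f, Defs.Var q L f <= C * DD q L f.

Lemma psi_deriv_bound t : 0 <= t ->
  2 * piE q L (fun x => (FF t x - mm) * Lgen q L (FF t) x) <= - (2 / C) * psi t.
Proof. intros Ht.
  set (h := fun x => FF t x - mm).
  assert (E1 : piE q L (fun x => (FF t x - mm) * Lgen q L (FF t) x) = - Dir q L h).
  { unfold Dir. rewrite Ropp_involutive. apply piE_ext. intros x Hx. unfold h.
    f_equal. rewrite (Lgen_ext q L h (fun u => 1 * FF t u + (- mm))) by (auto; intros; unfold h; ring).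
    rewrite Lgen_lin, Lgen_const. ring. }
  assert (E2 : Defs.Var q L h = psi t).
  { unfold Defs.Var, psi, h. rewrite piE_minus, mean_pres, piE_const by auto. ring. }
  rewrite E1, Dir_DD by auto. specialize (HP h). rewrite E2 in HP.
  pose proof (DD_nonneg q hq0 hq1 L h).
  assert (psi t / C <= DD q L h).
  { apply (Rmult_le_reg_l C); auto. unfold Rdiv. replace (C * (psi t * / C)) with (psi t) by (field; lra). lra. }
  unfold Rdiv in *. lra. Qed.

Lemma psi_nonneg t : 0 <= psi t.
Proof. unfold psi. apply piE_nonneg; auto. intros; apply Rle_0_sqr. Qed.

Lemma psi_decay t : 0 <= t -> psi t <= psi 0 * exp (- (2 / C) * t).
Proof. intros Ht. set (k := 2 / C).
  set (chi := fun tau => psi tau * exp (k * tau)).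
  assert (Hd : forall tau, is_derive chi tau
     (2 * piE q L (fun x => (FF tau x - mm) * Lgen q L (FF tau) x) * exp (k * tau) + psi tau * (k * exp (k * tau)))).
  { intros tau. apply (is_derive_mul psi (fun tau => exp (k * tau))). apply is_derive_psi.
    eapply is_derive_val.
    { apply (is_derive_comp exp (fun tau => k * tau)). apply is_derive_exp.
      apply is_derive_scal. apply (is_derive_id (K := R_AbsRing)). }
    change (scal (k * one) (exp (k * tau))) with ((k * 1) * exp (k * tau)). rreq. }
  destruct Ht as [Ht| <-].
  2:{ rewrite Rmult_0_r, exp_0. lra. }
  destruct (MVT_gen chi 0 t (fun tau => 2 * piE q L (fun x => (FF tau x - mm) * Lgen q L (FF tau) x) * exp (k * tau) + psi tau * (k * exp (k * tau))))
    as [c [Hc Hmvt]].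
  { intros x _. apply Hd. }
  { intros x _. apply derivable_continuous_pt. eexists. apply is_derive_Reals. apply Hd. }
  rewrite Rmin_left, Rmax_right in Hc by lra.
  pose proof (psi_deriv_bound c ltac:(lra)).
  assert (Hk : 0 < exp (k * c)) by apply exp_pos.
  assert (2 * piE q L (fun x => (FF c x - mm) * Lgen q L (FF c) x) * exp (k * c) + psi c * (k * exp (k * c)) <= 0).
  { assert (2 * piE q L (fun x => (FF c x - mm) * Lgen q L (FF c) x) * exp (k * c) <= - k * psi c * exp (k * c)).
    { apply Rmult_le_compat_r. lra. unfold k. lra. }
    lra. }
  cbv beta in Hmvt.
  assert (chi t <= chi 0).
  { set (D := 2 * piE q L (fun x => (FF c x - mm) * Lgen q L (FF c) x) * exp (k * c) + psi c * (k * exp (k * c))) in *.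
    assert (D * (t - 0) <= 0 * (t - 0)) by (apply Rmult_le_compat_r; lra). lra. }
  unfold chi in H1. rewrite Rmult_0_r, exp_0, Rmult_1_r in H1.
  replace (- k * t) with (- (k * t)) by ring. rewrite exp_Ropp.
  assert (0 < exp (k * t)) by apply exp_pos.
  apply (Rmult_le_reg_r (exp (k * t))); auto. rewrite Rmult_assoc, Rinv_l by lra. lra. Qed.

End Mix.

Section Mix2.
Variable q : R.
Hypothesis hq0 : 0 < q.
Hypothesis hq1 : q < / 2.
Notation p := (Defs.p q).

Lemma piL_ge s : q ^ (length s) <= piL q s.
Proof. induction s as [|b s IH]; simpl. lra.
  assert (q <= bern q b) by (destruct b; simpl; pose proof (q_lt_p q hq1); lra).
  apply Rmult_le_compat; auto. left; auto. apply pow_le; lra. Qed.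

Lemma exp_le a b : a <= b -> exp a <= exp b.
Proof. intros [H| ->]; [left; apply exp_increasing; auto| lra]. Qed.

Lemma mix_exists L : exists t, 0 <= t /\ forall eta, In eta (configs L) -> dTV q L t eta <= / 4.
Proof.
  destruct (Poincare q hq0 hq1 L) as [C [HC HP]].
  set (k := 2 / C). assert (Hk : 0 < k) by (unfold k; apply Rdiv_lt_0_compat; lra).
  assert (HqL : 0 < q ^ L) by (apply pow_lt; lra).
  set (a := 16 / q ^ L). assert (Ha : 0 < a) by (unfold a; apply Rdiv_lt_0_compat; lra).
  set (t := Rmax 0 (ln a / k)).
  exists t. split. apply Rmax_l.
  intros eta Heta. apply configs_len in Heta.
  set (g := fun s => if Rle_dec (piL q s) (Pt q L t eta s) then 1 else -1).
  assert (Hsum : lsum (configs L) (fun s => Rabs (Pt q L t eta s - piL q s)) = FF q L g t eta - mm q L g).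
  { unfold FF, mm, piE. rewrite <- lsum_minus. apply lsum_ext. intros s _. unfold g.
    destruct (Rle_dec (piL q s) (Pt q L t eta s)).
    rewrite Rabs_right by lra. ring. rewrite Rabs_left by lra. ring. }
  assert (Hg : forall s, -1 <= g s <= 1) by (intros; unfold g; destruct (Rle_dec _ _); lra).
  assert (Hm : -1 <= mm q L g <= 1).
  { unfold mm. split.
    rewrite <- (piE_const q L (-1)). apply piE_le; auto. intros; apply Hg.
    rewrite <- (piE_const q L 1). apply piE_le; auto. intros; apply Hg. }
  assert (Hpsi0 : psi q L g 0 <= 4).
  { unfold psi. rewrite <- (piE_const q L 4). apply piE_le; auto. intros x Hx.
    rewrite FF_0 by auto. pose proof (Hg x). nra. }
  assert (Ht : 0 <= t) by apply Rmax_l.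
  pose proof (psi_decay q hq0 hq1 L g C HC HP t Ht) as Hdec. fold k in Hdec.
  assert (He : exp (- k * t) <= / a).
  { rewrite <- (exp_ln a Ha). rewrite <- exp_Ropp. apply exp_le.
    assert (ln a / k <= t) by apply Rmax_r.
    assert (ln a <= k * t).
    { apply (Rmult_le_reg_r (/ k)). apply Rinv_0_lt_compat; auto.
      replace (k * t * / k) with t by (field; lra). auto. }
    lra. }
  assert (Hlow : piL q eta * ((FF q L g t eta - mm q L g) * (FF q L g t eta - mm q L g)) <= psi q L g t).
  { unfold psi, piE. apply (lsum_single_le _ (fun x => piL q x * ((FF q L g t x - mm q L g) * (FF q L g t x - mm q L g))) eta).
    apply configs_len; auto. intros b _. apply Rmult_le_pos. left; apply piL_pos; auto. apply Rle_0_sqr. }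
  pose proof (piL_ge eta) as Hpi. rewrite Heta in Hpi.
  set (X := FF q L g t eta - mm q L g) in *.
  assert (HX0 : 0 <= X) by (rewrite <- Hsum; apply lsum_nonneg; intros; apply Rabs_pos).
  assert (Hpsi : 0 <= psi q L g 0) by (apply psi_nonneg; auto).
  assert (psi q L g t <= 4 / a).
  { eapply Rle_trans. apply Hdec. unfold Rdiv. apply Rmult_le_compat; auto. left; apply exp_pos. }
  assert (4 / a = q ^ L / 4) by (unfold a; field; lra).
  assert (q ^ L * (X * X) <= q ^ L * / 4).
  { assert (q ^ L * (X * X) <= piL q eta * (X * X)) by (apply Rmult_le_compat_r; [apply Rle_0_sqr| auto]). lra. }
  assert (X * X <= / 4) by (apply Rmult_le_reg_l with (q ^ L); auto).
  assert (X <= / 2) by nra.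
  unfold dTV. rewrite Hsum. fold X. lra. Qed.


Lemma ind_marg (w u : list bool) b :
  ind (w ++ (b :: nil)) (u ++ (false :: nil)) + ind (w ++ (b :: nil)) (u ++ (true :: nil)) = ind w u.
Proof. unfold ind.
  destruct (list_eq_dec Bool.bool_dec w u) as [<-|Hne].
  - rewrite cfg_eqb_refl. destruct b.
    + rewrite cfg_eqb_refl, cfg_eqb_neq. ring. intros H. apply app_inj_tail in H. destruct H; discriminate.
    + rewrite cfg_eqb_refl, (cfg_eqb_neq (w ++ (false :: nil)) (w ++ (true :: nil))). ring. intros H. apply app_inj_tail in H. destruct H; discriminate.
  - rewrite !cfg_eqb_neq; auto; try ring; intros H; apply app_inj_tail in H; destruct H; auto. Qed.

Lemma ind_marg_if (w u : list bool) b :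
  (if cfg_eqb (w ++ (b :: nil)) (u ++ (false :: nil)) then 1 else 0) + (if cfg_eqb (w ++ (b :: nil)) (u ++ (true :: nil)) then 1 else 0)
  = (if cfg_eqb w u then 1 else 0).
Proof. apply ind_marg. Qed.

Lemma Qmat_marg L x' u' b : length x' = L ->
  Qmat q (S L) (x' ++ (b :: nil)) (u' ++ (false :: nil)) + Qmat q (S L) (x' ++ (b :: nil)) (u' ++ (true :: nil)) = Qmat q L x' u'.
Proof. intros Hx. unfold Qmat. rewrite <- Lgen_plus.
  rewrite Lgen_last by auto. cbv beta. rewrite !ind_marg_if.
  rewrite (Lgen_ext q L _ (fun w => if cfg_eqb w u' then 1 else 0)) by (auto; intros; apply ind_marg_if).
  rewrite pq_same. ring. Qed.

Lemma Qpow_marg L n x s : length x = S L -> length s = L ->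
  Qpow q (S L) n x (s ++ (false :: nil)) + Qpow q (S L) n x (s ++ (true :: nil)) = Qpow q L n (firstn L x) s.
Proof. revert x; induction n; intros x Hx Hs.
  - destruct (split_last x L Hx) as [x' [b [-> Hx']]]. rewrite firstn_app_last by auto.
    simpl. fold (ind (x' ++ (b :: nil)) (s ++ (false :: nil))). fold (ind (x' ++ (b :: nil)) (s ++ (true :: nil))). fold (ind x' s).
    apply ind_marg.
  - destruct (split_last x L Hx) as [x' [b [-> Hx']]]. rewrite firstn_app_last by auto.
    cbn [Qpow]. rewrite <- lsum_plus.
    rewrite (lsum_ext _ _ (fun u => Qmat q (S L) (x' ++ (b :: nil)) u * Qpow q L n (firstn L u) s)).
    2:{ intros u Hu. apply configs_len in Hu. rewrite <- IHn by auto. ring. }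
    rewrite lsum_configs_last. apply lsum_ext. intros u' Hu'. apply configs_len in Hu'.
    rewrite !firstn_app_last by auto. rewrite <- (Qmat_marg L x' u' b Hx'). ring. Qed.

Lemma Pt_marg L t x s : length x = S L -> length s = L ->
  Pt q L t (firstn L x) s = Pt q (S L) t x (s ++ (false :: nil)) + Pt q (S L) t x (s ++ (true :: nil)).
Proof. intros Hx Hs.
  assert (Hx' : length (firstn L x) = L) by (rewrite firstn_length; lia).
  eapply UL_sequence. apply (Pt_cv q hq0 hq1 L (firstn L x) s t Hx').
  apply (Un_cv_ext (fun N => sum_f_R0 (fun n => t ^ n / INR (fact n) * Qpow q (S L) n x (s ++ (false :: nil))) N +
                              sum_f_R0 (fun n => t ^ n / INR (fact n) * Qpow q (S L) n x (s ++ (true :: nil))) N)).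
  { intros N. rewrite <- sum_plus. apply sum_eq. intros i _. rewrite <- Qpow_marg by auto. ring. }
  apply CV_plus; apply Pt_cv; auto. Qed.

Lemma dTV_marg L t eta : length eta = L -> dTV q L t eta <= dTV q (S L) t (eta ++ (false :: nil)).
Proof. intros He. unfold dTV. apply Rmult_le_compat_l. lra.
  rewrite lsum_configs_last. apply lsum_le. intros s Hs. apply configs_len in Hs.
  assert (Hel : length (eta ++ (false :: nil)) = S L) by (rewrite length_app; simpl; lia).
  replace (Pt q L t eta s) with (Pt q L t (firstn L (eta ++ (false :: nil))) s) by (rewrite firstn_app_last; auto).
  rewrite Pt_marg by auto.
  replace (piL q s) with (piL q (s ++ (false :: nil)) + piL q (s ++ (true :: nil))) by (rewrite !piL_app; simpl; unfold Defs.p; ring).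
  eapply Rle_trans; [|apply Rabs_triang]. right. f_equal. ring. Qed.

Definition MixSet L := fun t => 0 <= t /\ forall eta, In eta (configs L) -> dTV q L t eta <= / 4.

Lemma Tmix_mono L : (1 <= L)%nat -> Tmix q L <= Tmix q (S L).
Proof. intros _. unfold Tmix. fold (MixSet L). fold (MixSet (S L)).
  assert (Hincl : forall t, MixSet (S L) t -> MixSet L t).
  { intros t [Ht H]. split; auto. intros eta Heta. apply configs_len in Heta.
    eapply Rle_trans. apply dTV_marg; auto. apply H. apply configs_len. rewrite length_app; simpl; lia. }
  destruct (mix_exists (S L)) as [t1 Ht1].
  assert (Hg1 : is_glb (MixSet (S L)) (Rinf (MixSet (S L)))).
  { apply glb_exists. exists t1; auto. exists 0. intros x [Hx _]; auto. }
  assert (Hg0 : is_glb (MixSet L) (Rinf (MixSet L))).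
  { apply glb_exists. exists t1; auto. exists 0. intros x [Hx _]; auto. }
  apply Hg1. intros x Hx. apply Hg0. auto. Qed.

End Mix2.

Theorem mainTheorem6 (q : R) (hq0 : 0 < q) (hq1 : q < / 2) :
  (forall L : nat, (1 <= L)%nat -> Trel q L <= Trel q (S L)) /\
  (forall L : nat, (1 <= L)%nat -> Tmix q L <= Tmix q (S L)) /\
  (forall L : nat, (1 <= L)%nat -> Thit q L <= Thit q (S L)).
Proof.
  split; [|split]; intros L HL.
  - apply (Trel_mono q hq0 hq1 L HL).
  - apply (Tmix_mono q hq0 hq1 L HL).
  - apply (Thit_mono q hq0 hq1 L HL).
Qed.
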